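(* Let $\vec d=(\vec a,\vec b)$ be a bidegree sequence of length $n$ with $\sum_i a_i=\sum_i b_i=n\bar c$, with the entries of $\vec a$ in non-increasing order, $m:=\min\vec d$ satisfying $1\le m\le n$, and $\max\vec d\le n$. Suppose there exist an integer $R\in[0..n]$ and a real $\lambda\ge0$ such that $\sum_{i=1}^R a_i=n\lambda$, $\sum_{i=1}^R b_i\le n\lambda$, $\lambda<m$ and $n-n\lambda/m-R\ge1$. Let $M=\max_{i\ge R}\max(a_i,b_i)$ and $k_*=m+\sqrt{m^2+n(\bar c-2m)+Rm}$; let $k=\lceil k_*\rceil$ if $m^2+n(\bar c-2m)+Rm\ge0$ and $k=1$ otherwise. If $$M\le\min\Big(\Big\lfloor\frac{n\bar c-nm-n\lambda+Rm}{k}+m\Big\rfloor,\ n\Big)$$ and either $k\le M$ or $k\le n-n\lambda/m-R$, then $\vec d$ is graphic with loops.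
   Context: A bidegree sequence of length $n$ is a pair $\vec d=(\vec a,\vec b)$ with $\vec a=(a_1,\dots,a_n)\in\mathbb{N}_0^n$ and $\vec b=(b_1,\dots,b_n)\in\mathbb{N}_0^n$. It is graphic with loops if there is an $n\times n$ matrix with entries in $\{0,1\}$ whose $i$th row sum is $a_i$ and whose $i$th column sum is $b_i$ for every $i\in[1..n]$. $\max\vec d$ and $\min\vec d$ denote the maximum and minimum over all $2n$ entries $a_1,\dots,a_n,b_1,\dots,b_n$. The number $\bar c$ (the average degree) is defined by $\sum_i a_i=\sum_i b_i=n\bar c$. For integers $a\le b$, $[a..b]:=\{x\in\mathbb{Z}:a\le x\le b\}$. *)

(* Defs.v *)
From Stdlib Require Import Reals ZArith.
From mathcomp Require Import all_boot.

Set Implicit Arguments.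
Unset Strict Implicit.
Unset Printing Implicit Defensive.

(* Vectors a, b indexed by 'I_n (paper index i in [1..n] is ordinal i-1). *)

Definition graphic_with_loops (n : nat) (a b : 'I_n -> nat) : Prop :=
  exists A : 'I_n -> 'I_n -> bool,
    (forall i : 'I_n, \sum_(j < n) nat_of_bool (A i j) = a i) /\
    (forall j : 'I_n, \sum_(i < n) nat_of_bool (A i j) = b j).

Definition dmax (n : nat) (a b : 'I_n -> nat) : nat :=
  \max_(i < n) maxn (a i) (b i).

(* min over all 2n entries (the neutral element dmax makes this the true
   minimum whenever n > 0) *)
Definition dmin (n : nat) (a b : 'I_n -> nat) : nat :=
  \big[minn/dmax a b]_(i < n) minn (a i) (b i).

(* Main.v *)
Require Import Defs.
From Stdlib Require Import Reals ZArith.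
From mathcomp Require Import all_boot.
From Stdlib Require Import Lia Psatz.
From mathcomp Require Import zify.
Delimit Scope R_scope with Re.

Section GRsec.
Set Implicit Arguments. Unset Strict Implicit. Unset Printing Implicit Defensive.

Lemma select_top (T : finType) (b : T -> nat) r : r <= #|T| ->
  exists C : {set T}, #|C| = r /\ forall x y, x \in C -> y \notin C -> b y <= b x.
Proof.
elim: r => [|r IH] Hr.
  by exists set0; split; [rewrite cards0|move=> x y; rewrite inE].
have [C [HC Hmax]] := IH (ltnW Hr).
have : 0 < #|~: C| by move: (cardsC C); rewrite HC; lia.
case/card_gt0P=> y0; rewrite inE => Hy0.
case: (@arg_maxnP T y0 (fun y => y \notin C) b Hy0) => y Hy Hymax.
exists (y |: C); split; first by rewrite cardsU1 Hy HC.
move=> x z; rewrite !inE negb_or => /orP [/eqP -> | HxC] /andP [Hzy HzC].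
  exact: Hymax.
exact: Hmax.
Qed.

Lemma sum_mem_card (T : finType) (C : {set T}) : \sum_j nat_of_bool (j \in C) = #|C|.
Proof. by rewrite -sum1_card [RHS]big_mkcond /=; apply: eq_bigr => j _; case: (j \in C). Qed.

Lemma GR (q : nat) : forall p (f : nat -> nat) (b : 'I_q -> nat),
 (forall i j, i <= j < p -> f j <= f i) ->
 \sum_(i < p) f i = \sum_j b j ->
 (forall t, t <= p -> \sum_j (b j - t) <= \sum_(t <= i < p) f i) ->
 exists A : nat -> 'I_q -> bool,
   (forall i, i < p -> \sum_j nat_of_bool (A i j) = f i) /\
   (forall j, \sum_(i < p) nat_of_bool (A i j) = b j).
Proof.
elim=> [|p IH] f b Hmono Hsum Hcond.
  exists (fun _ _ => false); split=> // j.
  rewrite big_ord0 /=; move: Hsum; rewrite big_ord0 => /esym/eqP.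
  rewrite sum_nat_eq0 => /forallP /(_ j) /implyP H; by apply/esym/eqP/H.
have Hbp : forall j, b j <= p.+1.
  move=> j; move: (Hcond p.+1 (leqnn _)); rewrite big_geq // leqn0 sum_nat_eq0.
  move/forallP/(_ j)/implyP/(_ isT); by rewrite subn_eq0.
have Hpos : f p <= #|[set j | 0 < b j]|.
  have H1 := Hcond 1 isT.
  have Heq : \sum_j b j = \sum_j (b j - 1) + #|[set j | 0 < b j]|.
    rewrite -sum_mem_card -big_split /=; apply: eq_bigr => j _; rewrite inE; case: (b j) => //= k.
    by rewrite subn1 addn1.
  have Hs2 : \sum_(i < p.+1) f i = f 0 + \sum_(1 <= i < p.+1) f i.
    by rewrite -(big_mkord xpredT) (big_ltn (ltn0Sn p)).
  have Hr0 : f p <= f 0 by apply: Hmono; rewrite leq0n /=.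
  lia.
have [C [HC HCmax]] := @select_top _ b (f p) (leq_trans Hpos (max_card _)).
have HCpos : forall x, x \in C -> 0 < b x.
  move=> x Hx; rewrite lt0n; apply/negP=> /eqP Hbx.
  have : [set j | 0 < b j] \subset C :\ x.
    apply/subsetP=> y; rewrite !inE => Hy.
    have [HyC|HyC] := boolP (y \in C).
      rewrite andbT; apply/negP=> /eqP Hyx; by rewrite Hyx Hbx in Hy.
    by move: (HCmax x y Hx HyC); rewrite Hbx leqn0 => /eqP H; rewrite H in Hy.
  move/subset_leq_card => H; move: (cardsD1 x C); rewrite Hx HC /= => Hr; have := leq_trans Hpos H; by rewrite Hr add1n ltnn.
have Hbsplit : forall j, b j = (b j - (j \in C)) + (j \in C).
  move=> j; case: (boolP (j \in C)) => Hj /=; last by rewrite subn0 addn0.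
  by rewrite subnK // HCpos.
have HsumC : \sum_j b j = \sum_j (b j - (j \in C)) + f p.
  rewrite -HC -sum_mem_card -big_split /=; apply: eq_bigr => j _; exact: Hbsplit.
have Hrle : forall i, i <= p -> f p <= f i.
  move=> i Hi; apply: Hmono; by rewrite Hi /=.
have Hm' : forall i j, i <= j < p -> f j <= f i.
  move=> i j /andP [Hij Hj]; apply: Hmono; by rewrite Hij ltnW.
have Hs' : \sum_(i < p) f i = \sum_j (b j - (j \in C)).
  by move: Hsum; rewrite big_ord_recr /= HsumC => /eqP; rewrite eqn_add2r => /eqP ->.
have Hc' : forall t, t <= p -> \sum_j (b j - (j \in C) - t) <= \sum_(t <= i < p) f i.
  move=> t Ht.
  have Hsplit : \sum_(t <= i < p.+1) f i = \sum_(t <= i < p) f i + f p.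
    by rewrite big_nat_recr.
  have [[x Hx Hbx]|Hall] : (exists2 x, x \in C & b x <= t) \/ (forall x, x \in C -> t < b x).
    case: (boolP [exists x, (x \in C) && (b x <= t)]).
      by case/existsP=> x /andP [H1 H2]; left; exists x.
    move/existsPn=> H; right=> x Hx; move: (H x); by rewrite Hx /= -ltnNge.
  + have H1 : \sum_j (b j - (j \in C) - t) <= \sum_(j in C) (p - t).
      rewrite [X in X <= _](bigID (fun j => j \in C)) /=.
      rewrite [X in _ + X]big1 ?addn0; last first.
        move=> j HjC; rewrite (negbTE HjC) subn0; apply/eqP; rewrite subn_eq0.
        exact: leq_trans (HCmax x j Hx HjC) Hbx.
      apply: leq_sum => j Hj; rewrite Hj /=; move: (Hbp j); lia.
    rewrite sum_nat_const HC in H1.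
    apply: (leq_trans H1).
    have : \sum_(t <= i < p) f p <= \sum_(t <= i < p) f i.
      rewrite big_nat_cond [X in _ <= X]big_nat_cond; apply: leq_sum => i /andP [/andP [_ Hi] _].
      apply: Hrle; exact: ltnW.
    by rewrite sum_nat_const_nat mulnC.
  + have H1 : \sum_j (b j - t) = \sum_j (b j - (j \in C) - t) + f p.
      rewrite -HC -sum_mem_card -big_split /=; apply: eq_bigr => j _.
      case: (boolP (j \in C)) => Hj /=; last by rewrite subn0 addn0.
      move: (Hall j Hj); lia.
    move: (Hcond t (leqW Ht)); rewrite H1 Hsplit; lia.
have [A' [HA1 HA2]] := IH f (fun j => b j - (j \in C)) Hm' Hs' Hc'.
exists (fun i j => if i == p then j \in C else A' i j); split.
+ move=> i; rewrite ltnS leq_eqVlt => /orP [/eqP -> | Hi].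
    by rewrite eqxx sum_mem_card.
  rewrite (ltn_eqF Hi); exact: HA1.
+ move=> j; rewrite big_ord_recr /= eqxx.
  under eq_bigr => i _ do rewrite (ltn_eqF (ltn_ord i)).
  by rewrite HA2 -Hbsplit.
Qed.

End GRsec.

Section Arsec.
Local Open Scope Z_scope.

Lemma S2core (n m M R N B k t S : Z) : 0 < n -> 0 < m -> 0 <= B <= N -> N <= n*m -> m < t < M -> M <= n ->
 ((m <= k <= t /\ (k-m)*(k-m) >= m*m+S-2*n*m+R*m /\ k*(M-m) + n*m + N <= S + R*m) \/ (m*m + S - 2*n*m + R*m < 0)) ->
 (M-m)*(n-t)*B + n*(M-t)*(S-B-(n-R)*m) <= n*(M-m)*(n-t)*m.
Proof.
intros Hn Hm HB HN Ht HMn H.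
set (g := fun x => n*(M-m)*(n-x)*m - (M-m)*(n-x)*B - n*(M-x)*(S-B-(n-R)*m)).
assert (HgM : 0 <= g M).
{ unfold g. replace (n * (M - m) * (n - M) * m - (M - m) * (n - M) * B - n * (M - M) * (S - B - (n - R) * m))
   with ((M-m)*(n-M)*(n*m-B)) by ring. apply Z.mul_nonneg_nonneg; [apply Z.mul_nonneg_nonneg|]; lia. }
assert (Hgoal : 0 <= g t -> (M-m)*(n-t)*B + n*(M-t)*(S-B-(n-R)*m) <= n*(M-m)*(n-t)*m) by (unfold g; lia).
apply Hgoal.
destruct H as [[Hk [Hq Hf]] | Hd].
- set (P := S - (n-R)*m).
  assert (HQ : P <= (n-k)*m + k*(k-m)) by (unfold P; nia).
  assert (HQ' : N + k*(M-k) <= (n-k)*m) by (unfold P in *; nia).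
  assert (Hgk : 0 <= g k).
  { unfold g.
    assert (H1 : n*(M-k)*(S-B-(n-R)*m) <= n*(M-k)*((n-k)*m + k*(k-m) - B)).
    { apply Z.mul_le_mono_nonneg_l; [nia|unfold P in HQ; lia]. }
    assert (H2 : n*((k-m)*((n-k)*m - k*(M-k))) >= n*((k-m)*N)).
    { apply Z.le_ge, Z.mul_le_mono_nonneg_l; [lia| apply Z.mul_le_mono_nonneg_l; lia]. }
    assert (H3 : 0 <= n*(k-m)*(N-B) + B*k*(M-m)).
    { assert (0 <= n*(k-m)*(N-B)) by (apply Z.mul_nonneg_nonneg; [apply Z.mul_nonneg_nonneg|]; lia).
      assert (0 <= B*k*(M-m)) by (apply Z.mul_nonneg_nonneg; [apply Z.mul_nonneg_nonneg|]; lia). lia. }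
    nia. }
  assert (Hid : (M-k)*g t = (M-t)*g k + (t-k)*g M) by (unfold g; ring).
  assert (0 <= (M-t)*g k + (t-k)*g M) by (assert (0 <= (M-t)*g k) by (apply Z.mul_nonneg_nonneg; lia);
     assert (0 <= (t-k)*g M) by (apply Z.mul_nonneg_nonneg; lia); lia).
  nia.
- assert (Hgm : 0 <= g m).
  { unfold g. replace (n * (M - m) * (n - m) * m - (M - m) * (n - m) * B - n * (M - m) * (S - B - (n - R) * m))
      with ((M-m)*(n*((n-m)*m - (S - (n-R)*m)) + m*B)) by ring.
    apply Z.mul_nonneg_nonneg; [lia|]. nia. }
  assert (Hid : (M-m)*g t = (M-t)*g m + (t-m)*g M) by (unfold g; ring).
  assert (0 <= (M-t)*g m + (t-m)*g M) by (assert (0 <= (M-t)*g m) by (apply Z.mul_nonneg_nonneg; lia);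
     assert (0 <= (t-m)*g M) by (apply Z.mul_nonneg_nonneg; lia); lia).
  nia.
Qed.

Lemma S1core (n m M R N B k t S : Z) : 0 < n -> 0 < m -> 0 <= R -> 0 <= B <= N -> m < t < M -> R < t -> t < k ->
 m <= k -> (k-m)*(k-m) >= m*m+S-2*n*m+R*m -> k*(M-m) + n*m + N <= S + R*m ->
 (k <= M \/ m*k + N + m*R <= m*n) ->
 (M-m)*(n-t)*B + n*(M-t)*(S-B-(n-R)*m) <= n*(M-m)*(S - N - (t-R)*M).
Proof.
intros Hn Hm HR HB Ht HRt Htk Hmk Hq Hf Hor.
set (E := S - N - (n-R)*m).
set (w := M - m). set (x := t - m).
assert (HE : k*w <= E) by (unfold E, w; lia).
set (U := w*((n-R)*m - N - (t-R)*M) + x*E).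
assert (Hh : n*(M-m)*(S - N - (t-R)*M) - ((M-m)*(n-t)*B + n*(M-t)*(S-B-(n-R)*m))
             = n*U + w*t*B + n*x*(N-B)) by (unfold U, E, w, x; ring).
assert (HxE : x*(k*w) <= x*E) by (apply Z.mul_le_mono_nonneg_l; unfold x; lia).
assert (HU : 0 <= U).
{ assert (Hbr : 0 <= (n-R)*m - N - (t-R)*M + k*x).
  { destruct (Z_le_gt_dec k M) as [HkM|HkM].
    - assert (HQ' : N + k*(M-k) <= (n-k)*m) by (unfold E, w in *; lia).
      assert (0 <= (k-t)*(M-k)) by (apply Z.mul_nonneg_nonneg; lia).
      assert (0 <= R*(M-m)) by (apply Z.mul_nonneg_nonneg; lia).
      unfold x; lia.
    - destruct Hor as [Hor|Hor]; [lia|].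
      assert (0 <= t*(k-M)) by (apply Z.mul_nonneg_nonneg; lia).
      assert (0 <= R*M) by (apply Z.mul_nonneg_nonneg; lia).
      unfold x; lia. }
  assert (0 <= w*((n-R)*m - N - (t-R)*M + k*x)) by (apply Z.mul_nonneg_nonneg; unfold w; lia).
  unfold U. lia. }
assert (0 <= w*t*B) by (apply Z.mul_nonneg_nonneg; [apply Z.mul_nonneg_nonneg|]; unfold w; lia).
assert (0 <= n*x*(N-B)) by (apply Z.mul_nonneg_nonneg; [apply Z.mul_nonneg_nonneg|]; unfold x; lia).
assert (0 <= n*U) by (apply Z.mul_nonneg_nonneg; lia).
lia.
Qed.

Lemma regionC (n m t B N D1 T : Z) : 0 < n -> t <= n -> 0 <= B <= N -> N <= n*m ->
  n*D1 <= (n-t)*B -> (n-t)*m <= T -> D1 <= T.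
Proof.
intros Hn Ht HB HN H1 HT.
assert (H2 : (n-t)*B <= (n-t)*N) by (apply Z.mul_le_mono_nonneg_l; lia).
assert (H3 : (n-t)*N <= (n-t)*(n*m)) by (apply Z.mul_le_mono_nonneg_l; lia).
assert (H4 : n*D1 <= n*((n-t)*m)) by lia.
apply Z.mul_le_mono_pos_l in H4; lia.
Qed.

Lemma regionD (n m M R N B k t S D1 D2 J T : Z) :
 0 < n -> 0 < m -> 0 <= R -> R < t -> m < t -> t < M -> M <= n -> 1 <= k ->
 0 <= B <= N -> N < n*m -> N + m*R + m <= m*n ->
 ((m <= k /\ k*m + k*m + S + R*m <= k*k + n*m + n*m) \/ (m*m + S + R*m < n*m + n*m /\ k = 1)) ->
 k*M + n*m + N <= S + R*m + k*m -> (k <= M \/ m*k + N + m*R <= m*n) ->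
 0 <= D1 -> 0 <= D2 -> 0 <= J ->
 n*D1 <= (n-t)*B -> (M-m)*D2 <= (M-t)*J -> J = S - B - (n-R)*m ->
 (n-t)*m <= T -> S - N - (t-R)*M <= T ->
 D1 + D2 <= T.
Proof.
intros Hn Hm HR HRt Hmt HtM HMn Hk HB HN HNs Hd Hf Hor HD1 HD2 HJ0 H1 H2 HJ HT1 HT2.
assert (H1' : (M-m)*(n*D1) <= (M-m)*((n-t)*B)) by (apply Z.mul_le_mono_nonneg_l; lia).
assert (H2' : n*((M-m)*D2) <= n*((M-t)*J)) by (apply Z.mul_le_mono_nonneg_l; lia).
subst J.
assert (Hc : n*(M-m)*(D1+D2) <= (M-m)*(n-t)*B + n*(M-t)*(S-B-(n-R)*m)) by lia.
assert (Hpos : 0 < n*(M-m)) by (apply Z.mul_pos_pos; lia).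
destruct (Z_le_gt_dec k t) as [Hkt|Hkt].
- assert (Hs : (M-m)*(n-t)*B + n*(M-t)*(S-B-(n-R)*m) <= n*(M-m)*(n-t)*m).
  { apply S2core with (R := R) (N := N) (k := k); lia. }
  assert (H4 : n*(M-m)*(D1+D2) <= n*(M-m)*((n-t)*m)) by lia.
  apply Z.mul_le_mono_pos_l in H4; lia.
- destruct Hd as [[Hd1 Hd2]|[Hd1 Hd2]]; [|lia].
  assert (Hs : (M-m)*(n-t)*B + n*(M-t)*(S-B-(n-R)*m) <= n*(M-m)*(S - N - (t-R)*M)).
  { apply S1core with (k := k); lia. }
  assert (H4 : n*(M-m)*(D1+D2) <= n*(M-m)*(S - N - (t-R)*M)) by lia.
  apply Z.mul_le_mono_pos_l in H4; lia.
Qed.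

End Arsec.

Lemma dmin_le (n : nat) (a b : 'I_n -> nat) i : dmin a b <= minn (a i) (b i).
Proof.
rewrite /dmin.
have H : forall r, i \in r -> \big[minn/dmax a b]_(j <- r) minn (a j) (b j) <= minn (a i) (b i).
  elim=> [|x r IH] //; rewrite in_cons big_cons => /orP [/eqP <- | Hr].
    exact: geq_minl.
  exact: leq_trans (geq_minr _ _) (IH Hr).
apply: H; exact: mem_index_enum.
Qed.

Lemma key (n : nat) (f : nat -> nat) (b : 'I_n -> nat) (m M R k : nat) :
 0 < m -> m <= n -> M <= n -> R <= n -> 1 <= k ->
 (forall i, i < n -> m <= f i <= n) -> (forall j, m <= b j <= n) ->
 (forall i j, i <= j < n -> f j <= f i) ->
 (forall i, R <= i.+1 -> i < n -> f i <= M) -> (forall j : 'I_n, R <= j.+1 -> b j <= M) ->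
 \sum_(i < n) f i = \sum_j b j ->
 \sum_(j < n | j < R) b j <= \sum_(i < R) f i ->
 \sum_(i < R) f i < n * m ->
 \sum_(i < R) f i + m * R + m <= m * n ->
 ((m <= k /\ k * m + k * m + \sum_(i < n) f i + R * m <= k * k + n * m + n * m) \/
  (m * m + \sum_(i < n) f i + R * m < n * m + n * m /\ k = 1)) ->
 k * (M - m) + n * m + \sum_(i < R) f i <= \sum_(i < n) f i + R * m ->
 (k <= M \/ m * k + \sum_(i < R) f i + m * R <= m * n) ->
 forall t, t <= n -> \sum_j (b j - t) <= \sum_(t <= i < n) f i.
Proof.
move=> Hm Hmn HMn HRn Hk Hf Hb Hmono HfM HbM Hsum HBN HNnm HNsl Hdisc Hfl Hor t Ht.
set S := \sum_(i < n) f i in Hsum Hdisc Hfl *.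
set N := \sum_(i < R) f i in HBN HNnm HNsl Hfl Hor *.
set B := \sum_(j < n | j < R) b j in HBN *.
set T := \sum_(t <= i < n) f i.
set D1 := \sum_(j < n | j < R) (b j - t).
set D2 := \sum_(j < n | ~~ (j < R)) (b j - t).
set J := \sum_(j < n | ~~ (j < R)) (b j - m).
have HD : \sum_j (b j - t) = D1 + D2 by rewrite (bigID (fun j : 'I_n => j < R)).
rewrite HD.
have HSnat : S = \sum_(0 <= i < n) f i by rewrite /S big_mkord.
have Hpre : S = \sum_(0 <= i < t) f i + T by rewrite HSnat /T -big_cat_nat.
have HSN : S = N + \sum_(R <= i < n) f i by rewrite HSnat /N -(big_mkord xpredT) -big_cat_nat.
have HT1 : (n - t) * m <= T.
  rewrite /T -sum_nat_const_nat big_nat_cond [X in _ <= X]big_nat_cond.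
  apply: leq_sum => i /andP [/andP [_ Hi] _]; by case/andP: (Hf i Hi).
have HT1' : n * m <= T + t * m.
  have E : (n - t) * m + t * m = n * m by rewrite -mulnDl subnK.
  by rewrite -E leq_add2r.
have HRm : \sum_(j < n | j < R) m = R * m.
  by rewrite -(big_ord_widen n (fun _ => m) HRn) sum_nat_const card_ord.
have Hnm : \sum_(j < n) m = n * m by rewrite sum_nat_const card_ord.
have HJeq : J + B + n * m = S + R * m.
  have HbS : \sum_j b j = B + \sum_(j < n | ~~ (j < R)) b j by rewrite (bigID (fun j : 'I_n => j < R)).
  rewrite Hsum HbS.
  have -> : \sum_(j < n | ~~ (j < R)) b j = J + \sum_(j < n | ~~ (j < R)) m.
    rewrite /J -big_split /=; apply: eq_bigr => j _; rewrite subnK //; by case/andP: (Hb j).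
  have Hm2 : \sum_(j < n) m = \sum_(j < n | j < R) m + \sum_(j < n | ~~ (j < R)) m
    by rewrite (bigID (fun j : 'I_n => j < R)).
  rewrite HRm Hnm in Hm2; clear -Hm2; lia.
have [Htm|Hmt] := leqP t m.
  have H1 : D1 + D2 + n * t = S.
    have Hnt : \sum_(j < n) t = n * t by rewrite sum_nat_const card_ord.
    rewrite -HD Hsum -Hnt -big_split /=.
    apply: eq_bigr => j _; rewrite subnK //; apply: leq_trans Htm _; by case/andP: (Hb j).
  have H2 : \sum_(0 <= i < t) f i <= t * n.
    have -> : t * n = \sum_(0 <= i < t) n by rewrite sum_nat_const_nat subn0.
    rewrite big_nat_cond [X in _ <= X]big_nat_cond.
    apply: leq_sum => i /andP [/andP [_ Hi] _].
    by case/andP: (Hf i (leq_trans Hi Ht)).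
  clear -H1 H2 Hpre; lia.
have [HtR|HRt] := leqP t R.
  have H1 : D1 <= B by apply: leq_sum => j _; exact: leq_subr.
  have H2 : D2 <= J by apply: leq_sum => j _; apply: leq_sub2l; exact: ltnW.
  have H3 : T = \sum_(t <= i < R) f i + \sum_(R <= i < n) f i by rewrite /T -big_cat_nat.
  have H4 : (R - t) * m <= \sum_(t <= i < R) f i.
    rewrite -sum_nat_const_nat big_nat_cond [X in _ <= X]big_nat_cond.
    apply: leq_sum => i /andP [/andP [_ Hi] _]; by case/andP: (Hf i (leq_trans Hi HRn)).
  have H5 : (R - t) * m + t * m = R * m by rewrite -mulnDl subnK.
  have H6 : m * t <= m * R by rewrite leq_mul2l HtR orbT.
  clear -H1 H2 H3 H4 H5 H6 HSN HJeq HNsl; lia.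
have HtRn : t <= n := Ht.
have HS2 : \sum_(R <= i < n) f i = \sum_(R <= i < t) f i + T by rewrite /T -big_cat_nat // ltnW.
have HRtM : \sum_(R <= i < t) f i <= (t - R) * M.
  rewrite -sum_nat_const_nat big_nat_cond [X in _ <= X]big_nat_cond.
  apply: leq_sum => i /andP [/andP [HRi Hi] _]; apply: HfM; [exact: leqW | exact: leq_trans Hi Ht].
have HRM2 : (t - R) * M + R * M = t * M by rewrite -mulnDl subnK // ltnW.
have HRtM' : \sum_(R <= i < t) f i + R * M <= t * M by rewrite -HRM2 leq_add2r.
have HD1 : n * D1 + t * B <= n * B.
  rewrite /D1 /B !big_distrr -big_split /=; apply: leq_sum => j _.
  case/andP: (Hb j) => _ Hbn; clear -Hbn Ht; nia.
have [HMt|HtM] := leqP M t.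
  have HD2 : D2 = 0.
    apply: big1 => j Hj; apply/eqP; rewrite subn_eq0; apply: leq_trans HMt.
    apply: HbM; rewrite -ltnNge in Hj; exact: ltnW.
  rewrite HD2 addn0.
  have := @regionC (Z.of_nat n) (Z.of_nat m) (Z.of_nat t) (Z.of_nat B) (Z.of_nat N) (Z.of_nat D1) (Z.of_nat T).
  have Hn : 0 < n by apply: leq_trans Hmn. clear -Hn Ht HBN HNnm HD1 HT1'; lia.
have HD2 : M * D2 + t * J <= m * D2 + M * J.
  rewrite /D2 /J !big_distrr -!big_split /=; apply: leq_sum => j Hj.
  have HbjM : b j <= M by apply: HbM; rewrite -ltnNge in Hj; exact: ltnW.
  case/andP: (Hb j) => Hmb _. clear -Hmb HbjM Hmt HtM; nia.
have := @regionD (Z.of_nat n) (Z.of_nat m) (Z.of_nat M) (Z.of_nat R) (Z.of_nat N) (Z.of_nat B)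
  (Z.of_nat k) (Z.of_nat t) (Z.of_nat S) (Z.of_nat D1) (Z.of_nat D2) (Z.of_nat J) (Z.of_nat T).
clear -Hm Hmn HMn HRt Hmt HtM Hk HBN HNnm HNsl Hdisc Hfl Hor HD1 HD2 HJeq HT1' HS2 HRtM' HSN; lia.
Qed.

Theorem corollary5 (n : nat) (a b : 'I_n -> nat) (Rr : nat) (lam : R) :
  let m : nat := dmin a b in
  let cbar : R := Rdiv (INR (\sum_(i < n) a i)) (INR n) in
  let disc : R := Rplus (Rplus (Rmult (INR m) (INR m))
                         (Rmult (INR n) (Rminus cbar (Rmult 2 (INR m)))))
                        (Rmult (INR Rr) (INR m)) in
  let kstar : R := Rplus (INR m) (sqrt disc) in
  let k : Z := if Rle_dec 0 disc then Zceil kstar else 1%Z in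
  let M : nat := \max_(i < n | (Rr <= i.+1)%N) maxn (a i) (b i) in
  let slack : R := Rminus (Rminus (INR n) (Rdiv (Rmult (INR n) lam) (INR m))) (INR Rr) in
  \sum_(i < n) a i = \sum_(i < n) b i ->
  (forall i j : 'I_n, (i <= j)%N -> (a j <= a i)%N) ->
  (1 <= m <= n)%N ->
  (dmax a b <= n)%N ->
  (Rr <= n)%N ->
  Rle 0 lam ->
  INR (\sum_(i < n | (i < Rr)%N) a i) = Rmult (INR n) lam ->
  Rle (INR (\sum_(i < n | (i < Rr)%N) b i)) (Rmult (INR n) lam) ->
  Rlt lam (INR m) ->
  Rge slack 1 ->
  Z.le (Z.of_nat M)
    (Z.min (Zfloor (Rplus (Rdiv (Rplus (Rminus (Rminus (Rmult (INR n) cbar)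
                                                    (Rmult (INR n) (INR m)))
                                            (Rmult (INR n) lam))
                                     (Rmult (INR Rr) (INR m)))
                               (IZR k))
                         (INR m)))
           (Z.of_nat n)) ->
  Z.le k (Z.of_nat M) \/ Rle (IZR k) slack ->
  graphic_with_loops a b.
Proof.
intros m cbar disc kstar k M slack Hsum Hmono Hm Hmax HRn Hlam HN HB Hlm Hslack Hfl Hor.
set S := \sum_(i < n) a i.
set Na := \sum_(i < n | (i < Rr)%N) a i.
set Nb := \sum_(i < n | (i < Rr)%N) b i.
have Hm1 : (1 <= m)%N by case/andP: Hm.
have Hmn : (m <= n)%N by case/andP: Hm.
have Hn : (0 < n)%N by apply: leq_trans Hmn.
have HnR : (0 < INR n)%Re by apply: lt_0_INR; apply/ltP.
have HmR : (0 < INR m)%Re by apply: lt_0_INR; apply/ltP.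
have HcS : (INR n * cbar = INR S)%Re by rewrite /cbar /S; field; apply: not_0_INR; apply/eqP; rewrite -lt0n.
have HNbNa : (Nb <= Na)%N by apply/leP; apply: INR_le; rewrite HN.
have HNnm : (Na < n * m)%N.
  apply/ltP; apply: INR_lt; rewrite mult_INR HN; apply: Rmult_lt_compat_l => //.
have HNsl : (Na + m * Rr + m <= m * n)%N.
  apply/leP; apply: INR_le; rewrite !plus_INR !mult_INR HN.
  move: Hslack; rewrite /slack => H.
  have H2 : (INR n * lam / INR m <= INR n - INR Rr - 1)%Re by lra.
  have H3 : (INR n * lam <= (INR n - INR Rr - 1) * INR m)%Re.
    move: (Rmult_le_compat_r _ _ _ (Rlt_le _ _ HmR) H2).
    replace (INR n * lam / INR m * INR m)%Re with (INR n * lam)%Re by (field; lra); lra.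
  nra.
have Hdisc : disc = (INR m * INR m + INR S - INR n * INR m - INR n * INR m + INR Rr * INR m)%Re.
  rewrite /disc; move: HcS; rewrite /cbar => HcS'. rewrite Rmult_minus_distr_l HcS'; ring.
have [kn [Hkn [Hk1 Hkf]]] : exists kn, k = Z.of_nat kn /\ (1 <= kn)%N /\
   ((m <= kn /\ kn * m + kn * m + S + Rr * m <= kn * kn + n * m + n * m) \/
    (m * m + S + Rr * m < n * m + n * m /\ kn = 1))%N.
  rewrite /k; case: Rle_dec => Hd /=.
  - have Hsq := sqrt_pos disc.
    have [Hc1 Hc2] := Zceil_bound kstar.
    have Hc2b : (INR m + sqrt disc <= IZR (Zceil kstar))%Re by exact: Hc2.
    have Hkm : (INR m <= IZR (Zceil kstar))%Re by lra.
    have Hk0 : (0 <= Zceil kstar)%Z by apply: le_IZR; lra.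
    exists (Z.to_nat (Zceil kstar)).
    have HkE : Z.of_nat (Z.to_nat (Zceil kstar)) = Zceil kstar by rewrite Z2Nat.id.
    have HkR : INR (Z.to_nat (Zceil kstar)) = IZR (Zceil kstar) by rewrite INR_IZR_INZ HkE.
    split; first by [].
    split.
      apply/leP; apply: INR_le; rewrite HkR /=; apply: Rle_trans Hkm; by apply: (le_INR 1); apply/leP.
    left; split.
      apply/leP; apply: INR_le; by rewrite HkR.
    apply/leP; apply: INR_le; rewrite !plus_INR !mult_INR HkR.
    have Hsq2 : (sqrt disc <= IZR (Zceil kstar) - INR m)%Re by lra.
    have Hsq3 : (disc <= (IZR (Zceil kstar) - INR m) * (IZR (Zceil kstar) - INR m))%Re.
      rewrite -(sqrt_sqrt disc Hd); apply: Rmult_le_compat; lra.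
    rewrite Hdisc in Hsq3; lra.
  - exists 1%N; split; first by []; split; first by [].
    right; split => //.
    apply/ltP; apply: INR_lt; rewrite !plus_INR !mult_INR; rewrite Hdisc in Hd; lra.
have HkR : IZR k = INR kn by rewrite Hkn -INR_IZR_INZ.
have HknR : (0 < INR kn)%Re by apply: lt_0_INR; apply/ltP.
have HMfl : (Z.of_nat M <= Zfloor ((INR n * cbar - INR n * INR m - INR n * lam + INR Rr * INR m) / IZR k + INR m))%Z
  := Z.le_trans _ _ _ Hfl (Z.le_min_l _ _).
have HM1 : (INR M <= (INR n * cbar - INR n * INR m - INR n * lam + INR Rr * INR m) / IZR k + INR m)%Re.
  have [Hfb _] := Zfloor_bound ((INR n * cbar - INR n * INR m - INR n * lam + INR Rr * INR m) / IZR k + INR m).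
  apply: Rle_trans Hfb; rewrite INR_IZR_INZ; exact: IZR_le.
rewrite HcS -HN HkR -/Na in HM1.
have Hfloor : (kn * M + n * m + Na <= S + Rr * m + kn * m)%N.
  apply/leP; apply: INR_le; rewrite !plus_INR !mult_INR.
  have H2 : ((INR M - INR m) * INR kn <= (INR S - INR n * INR m - INR Na + INR Rr * INR m))%Re.
    have H3 : (INR M - INR m <= (INR S - INR n * INR m - INR Na + INR Rr * INR m) / INR kn)%Re by lra.
    move: (Rmult_le_compat_r _ _ _ (Rlt_le _ _ HknR) H3).
    by replace ((INR S - INR n * INR m - INR Na + INR Rr * INR m) / INR kn * INR kn)%Re
      with (INR S - INR n * INR m - INR Na + INR Rr * INR m)%Re by (field; lra).
  lra.
have Hor2 : (kn <= M \/ m * kn + Na + m * Rr <= m * n)%N.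
  case: Hor => [H|H]; [left|right].
    rewrite Hkn in H; apply/leP; lia.
  apply/leP; apply: INR_le; rewrite !plus_INR !mult_INR HN.
  move: H; rewrite HkR /slack => H.
  have H2 : (INR n * lam / INR m <= INR n - INR Rr - INR kn)%Re by lra.
  move: (Rmult_le_compat_r _ _ _ (Rlt_le _ _ HmR) H2).
  replace (INR n * lam / INR m * INR m)%Re with (INR n * lam)%Re by (field; lra); lra.
have Hab : forall i, (m <= a i <= n)%N /\ (m <= b i <= n)%N.
  move=> i; have H1 := @dmin_le n a b i.
  have H2 : (maxn (a i) (b i) <= n)%N.
    apply: leq_trans Hmax; rewrite /dmax; exact: (leq_bigmax i).
  rewrite !(leq_trans H1 (geq_minl _ _)) !(leq_trans H1 (geq_minr _ _)) /=.
  by rewrite !(leq_trans _ H2) // ?leq_maxl ?leq_maxr.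
have HMi : forall i : 'I_n, (Rr <= i.+1)%N -> (a i <= M)%N /\ (b i <= M)%N.
  move=> i Hi; have H := @leq_bigmax_cond _ (fun i : 'I_n => Rr <= i.+1)%N (fun i => maxn (a i) (b i)) i Hi.
  by rewrite !(leq_trans _ H) // ?leq_maxl ?leq_maxr.
have HMn : (M <= n)%N.
  apply/bigmax_leqP => i _; apply: leq_trans Hmax; rewrite /dmax; exact: (leq_bigmax i).
have HmM : (m <= M)%N.
  have Hi : (n.-1 < n)%N by rewrite prednK.
  have Hc : (Rr <= (Ordinal Hi).+1)%N by rewrite /= prednK.
  have /andP [H2 _] := (Hab (Ordinal Hi)).1.
  have H := @leq_bigmax_cond _ (fun i : 'I_n => Rr <= i.+1)%N (fun i => maxn (a i) (b i)) (Ordinal Hi) Hc.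
  exact: leq_trans H2 (leq_trans (leq_maxl _ _) H).
pose f := fun i : nat => oapp a 0%N (insub i).
have fE : forall j : 'I_n, f j = a j by move=> j; rewrite /f valK.
have fE' : forall i (Hi : (i < n)%N), f i = a (Ordinal Hi) by move=> i Hi; rewrite /f insubT.
have HfS : \sum_(i < n) f i = S by apply: eq_bigr => i _; rewrite fE.
have HfN : \sum_(i < Rr) f i = Na.
  rewrite (big_ord_widen n f HRn) /Na; apply: eq_bigr => i _; by rewrite fE.
have Hfm : forall i j, (i <= j < n)%N -> (f j <= f i)%N.
  move=> i j /andP [Hij Hj]; have Hi : (i < n)%N by apply: leq_ltn_trans Hj.
  rewrite (fE' _ Hi) (fE' _ Hj); exact: Hmono.
have Hcond : forall t, (t <= n)%N -> (\sum_j (b j - t) <= \sum_(t <= i < n) f i)%N.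
  apply: (@key n f b m M Rr kn) => //.
  - move=> i Hi; rewrite (fE' _ Hi); exact: (Hab _).1.
  - move=> j; exact: (Hab _).2.
  - move=> i Hi1 Hi2; rewrite (fE' _ Hi2); exact: (HMi (Ordinal Hi2) Hi1).1.
  - move=> j Hj; exact: (HMi j Hj).2.
  - by rewrite HfS.
  - by rewrite HfN.
  - by rewrite HfN.
  - by rewrite HfN.
  - by rewrite HfS.
  - rewrite HfS HfN; nia.
  - by rewrite HfN.
have HfS2 : \sum_(i < n) f i = \sum_j b j by rewrite HfS.
have [A [HA1 HA2]] := @GR n n f b Hfm HfS2 Hcond.
exists (fun i j => A i j); split.
  move=> i; rewrite HA1 ?fE //.
by move=> j; rewrite HA2.
Qed.
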